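(* Let $X$ be a finite set and let $\mathcal{P}=\{X_1,\ldots,X_m\}$ be an $(m,k)$-partition of $X$ such that, for each $i\in\{1,\ldots,k\}$, $\mathcal{P}$ has exactly $m_i\ge1$ blocks of size $n_i\ge1$. Then \[|T(X,\mathcal{P})|=\prod_{i=1}^k\Bigg(\sum_{j=1}^k m_j n_j^{\,n_i}\Bigg)^{m_i}.\]
   Context: An $(m,k)$-partition is a partition with exactly $m$ blocks having exactly $k$ distinct block sizes (here $n_1,\ldots,n_k$ are the distinct block sizes). $T(X,\mathcal{P})$ is the set of all maps $f\colon X\to X$ such that for every block $B$ of $\mathcal{P}$ there is a block $C$ of $\mathcal{P}$ with $Bf\subseteq C$. *)

(* Defs.v *)
From mathcomp Require Import all_boot.
Set Implicit Arguments. Unset Strict Implicit. Unset Printing Implicit Defensive.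

Definition T_part (X : finType) (P : {set {set X}}) : {set {ffun X -> X}} :=
  [set f : {ffun X -> X} | [forall B in P, exists C in P, (f @: B) \subset C]].

(* Main.v *)
Require Import Defs.
From mathcomp Require Import all_boot.

Lemma count_T (X : finType) (P : {set {set X}}) : partition P [set: X] ->
 #|T_part P| = \prod_(B in P) \sum_(C in P) #|C| ^ #|B|.
Proof.
move=> /and3P[/eqP covP tI nz0].
have pbB B x : B \in P -> x \in B -> pblock P x = B by move=> *; exact: def_pblock.
have pbP x : pblock P x \in P by apply: pblock_mem; rewrite covP inE.
have xpb x : x \in pblock P x by rewrite mem_pblock covP inE.
have neB B : B \in P -> exists x, x \in B.
  move=> BP; case: (set_0Vmem B) => [B0|[x xB]]; last by exists x.
  by move: nz0; rewrite -B0 BP.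
pose phi (f : {ffun X -> X}) : {ffun {set X} -> {set X}} :=
  [ffun B => if B \in P then (if [pick x in B] is Some x then pblock P (f x) else set0) else set0].
rewrite -sum1_card (partition_big phi (mem (pfamily set0 P (fun _ => P)))).
  rewrite (big_distr_big_dep set0) /=.
  apply: eq_big => // s Hs.
  have [sup sP] := pfamilyP Hs.
  transitivity (\prod_x \sum_(y in s (pblock P x)) 1).
    rewrite bigA_distr_big_dep /=.
    under [RHS]eq_bigr do rewrite big1_eq.
    apply: eq_bigl => f; rewrite /T_part inE.
    apply/andP/familyP => [[/forallP H /eqP <-] x | H].
      rewrite ffunE pbP /=. case: pickP => [y yB | /(_ x)]; last by rewrite xpb.
      have /implyP/(_ (pbP x))/existsP[C /andP[CP sub]] := H (pblock P x).
      have fx : f x \in C by apply: (subsetP sub); apply: imset_f.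
      have fy : f y \in C by apply: (subsetP sub); apply: imset_f.
      by rewrite (pbB C (f y) CP fy).
    split.
      apply/forallP => B; apply/implyP => BP; apply/existsP; exists (s B).
      rewrite sP //=; apply/subsetP => _ /imsetP[y yB ->].
      by have := H y; rewrite (pbB B y BP yB).
    apply/eqP/ffunP => B; rewrite ffunE; case: ifP => BP.
      case: pickP => [y yB|none]; last first.
        by have [x xB] := neB B BP; move: (none x); rewrite xB.
      by have := H y; rewrite (pbB B y BP yB) => fy; rewrite (pbB _ _ (sP B BP) fy).
    apply/esym/eqP; apply: contraFT BP => h; exact: (subsetP sup).
  under eq_bigr do rewrite sum1_card.
  transitivity (\prod_(x in cover P) #|s (pblock P x)|).
    by rewrite covP; apply: eq_bigl => x; rewrite inE.
  rewrite big_trivIset //=; apply: eq_bigr => B BP; rewrite -prod_nat_const.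
  by apply: eq_bigr => x xB; rewrite (pbB B x BP xB).
move=> f; rewrite inE => /forallP H; apply/pfamilyP; split.
  by apply/subsetP => B; rewrite !inE ffunE; case: ifP => //; rewrite eqxx.
move=> B BP; rewrite ffunE BP; case: pickP => [y _|none]; first exact: pbP.
by have [x xB] := neB B BP; rewrite none in xB.
Qed.

Lemma regroup (X : finType) (P : {set {set X}}) (k : nat) (n : 'I_k -> nat)
  (idx : nat) (op : Monoid.com_law idx) (G : nat -> nat) :
  injective n -> (forall B, B \in P -> exists i, #|B| = n i) ->
  \big[op/idx]_(B in P) G #|B| =
  \big[op/idx]_(j < k) \big[op/idx]_(B in P | #|B| == n j) G (n j).
Proof.
move=> ninj Hex.
transitivity (\big[op/idx]_(B in P) \big[op/idx]_(j < k | #|B| == n j) G (n j)); last first.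
  by rewrite (exchange_big_dep predT).
apply: eq_bigr => B BP; have [i e] := Hex B BP.
rewrite (bigD1 i) /=; last by rewrite e.
rewrite big1 ?Monoid.mulm1 ?e // => j /andP[/eqP e' ne].
by move: ne; rewrite (ninj j i) ?eqxx // -e' e.
Qed.

Theorem theorem6p1 (X : finType) (P : {set {set X}}) (k : nat)
    (n m : 'I_k -> nat) :
    partition P [set: X] ->
    injective n ->
    (forall i, 1 <= n i) ->
    (forall i, 1 <= m i) ->
    (forall i, #|[set B in P | #|B| == n i]| = m i) ->
    (forall B, B \in P -> exists i, #|B| = n i) ->
    #|T_part P| = \prod_(i < k) (\sum_(j < k) m j * n j ^ n i) ^ m i.
Proof.
move=> hP ninj _ _ hm hex.
have hs e : \sum_(C in P) #|C| ^ e = \sum_(j < k) m j * n j ^ e.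
  rewrite (@regroup _ P k n _ _ (fun c => c ^ e) ninj hex); apply: eq_bigr => j _.
  by rewrite -hm -sum_nat_const; apply: eq_bigl => B; rewrite inE.
rewrite count_T //.
under eq_bigr do rewrite hs.
rewrite (@regroup _ P k n _ _ (fun c => \sum_(j < k) m j * n j ^ c) ninj hex); apply: eq_bigr => i _.
by rewrite -hm -prod_nat_const; apply: eq_bigl => B; rewrite inE.
Qed.
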